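(* Let $\tilde P$ be a convex polygon with $k$ vertices $\tilde P_1,\dots,\tilde P_k$, and suppose that exactly $j$ pairs of its sides are parallel, $0\le j\le k/2$. Set $n=k-j$. Then the list of vertices of $\tilde P$ can be rewritten (allowing consecutive repetitions of a vertex) as a list $P_1,\dots,P_{2n}$ (indices modulo $2n$) such that for each $1\le i\le n$, either the side $P_iP_{i+1}$ is parallel to the side $P_{i+n}P_{i+n+1}$, or one of these two sides, say $P_{i+n}P_{i+n+1}$, degenerates to a point; in the latter case the other side $P_iP_{i+1}$ is non-degenerate and the line through $P_{i+n}=P_{i+n+1}$ parallel to $P_iP_{i+1}$ lies outside the interior of $P$. *)

(* Defs.v *)
From HB Require Import structures.
From mathcomp Require Import all_boot all_order all_algebra.
Set Implicit Arguments. Unset Strict Implicit. Unset Printing Implicit Defensive.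
Import Order.TTheory GRing.Theory Num.Theory.
Local Open Scope ring_scope.

Section Plane.
Variable R : realFieldType.
Definition pt := (R * R)%type.

Definition psub (a b : pt) : pt := (a.1 - b.1, a.2 - b.2).
Definition padd (a b : pt) : pt := (a.1 + b.1, a.2 + b.2).
Definition pscale (t : R) (a : pt) : pt := (t * a.1, t * a.2).
Definition cross (u v : pt) : R := u.1 * v.2 - u.2 * v.1.

Definition vtx (s : seq pt) (m : nat) : pt := nth (0, 0) s (m %% size s).
Definition side_dir (s : seq pt) (m : nat) : pt := psub (vtx s m.+1) (vtx s m).

(* s lists the k = size s >= 3 vertices of a (strictly) convex polygon in
   cyclic order (either orientation): for every side, all the other vertices
   lie strictly on one and the same side of the line through it. *)
Definition convex_polygon (s : seq pt) : Prop :=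
  (3 <= size s)%N /\
  ((forall i j, (i < size s)%N -> (j < size s)%N -> j != i ->
      j != (i.+1 %% size s)%N ->
      0 < cross (side_dir s i) (psub (vtx s j) (vtx s i))) \/
   (forall i j, (i < size s)%N -> (j < size s)%N -> j != i ->
      j != (i.+1 %% size s)%N ->
      cross (side_dir s i) (psub (vtx s j) (vtx s i)) < 0)).

Definition num_parallel_pairs (s : seq pt) : nat :=
  #|[set ij : 'I_(size s) * 'I_(size s) |
       ((ij.1 < ij.2)%N && (cross (side_dir s ij.1) (side_dir s ij.2) == 0))]|.

Definition poly_interior (s : seq pt) (x : pt) : Prop :=
  (forall i, (i < size s)%N -> 0 < cross (side_dir s i) (psub x (vtx s i))) \/
  (forall i, (i < size s)%N -> cross (side_dir s i) (psub x (vtx s i)) < 0).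

(* Q is the cyclic vertex list of s rewritten with consecutive repetitions
   allowed: Q_m = s_(f m), and going from Q_m to Q_(m+1) (cyclically) either
   stays at the same vertex or advances to the next one, advancing exactly
   size s times in total (so the polygon is traversed exactly once). *)
Definition vertex_relisting (s Q : seq pt) : Prop :=
  exists f : nat -> nat,
    (forall m, (m < size Q)%N -> (f m < size s)%N /\ vtx Q m = vtx s (f m)) /\
    (forall m, (m < size Q)%N ->
        f (m.+1 %% size Q)%N = f m \/ f (m.+1 %% size Q)%N = ((f m).+1 %% size s)%N) /\
    #|[set m : 'I_(size Q) | f (m.+1 %% size Q)%N != f m]| = size s.

Definition parallel_sides (a b c d : pt) : Prop :=
  b <> a /\ d <> c /\ cross (psub b a) (psub d c) = 0.

Definition degenerate_side (s : seq pt) (a b c d : pt) : Prop :=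
  c = d /\ b <> a /\
  forall t : R, ~ poly_interior s (padd c (pscale t (psub b a))).

End Plane.

(* Main.v *)
Require Import Defs.
From HB Require Import structures.
From mathcomp Require Import all_boot all_order all_algebra.
From mathcomp Require Import ring lra zify.
Import Order.TTheory GRing.Theory Num.Theory.

Local Open Scope ring_scope.
Set Implicit Arguments. Unset Strict Implicit.

Section Vec.
Variable R : realFieldType.
Variable sg : R.
Hypothesis sgsq : sg * sg = 1.
Definition scr (u v : pt R) := sg * cross u v.
Definition dot (u v : pt R) := u.1 * v.1 + u.2 * v.2.
Definition vneg (u : pt R) : pt R := (- u.1, - u.2).

Lemma sgE (a b : R) : sg * a * (sg * b) = a * b.
Proof. by rewrite mulrACA sgsq mul1r. Qed.

Lemma plucker o x y z : scr x z * scr o y = scr x y * scr o z + scr y z * scr o x.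
Proof.
rewrite /scr !sgE; case: o => o1 o2; case: x => x1 x2; case: y => y1 y2; case: z => z1 z2.
rewrite /cross /=; ring.
Qed.

Lemma dotid o x y : dot o o * scr x y = dot o x * scr o y - scr o x * dot o y.
Proof.
rewrite /scr; case: o => o1 o2; case: x => x1 x2; case: y => y1 y2.
rewrite /cross /dot /=; ring.
Qed.

Lemma scrNl x y : scr (vneg x) y = - scr x y.
Proof. rewrite /scr /cross /vneg /=; ring. Qed.
Lemma scrNr x y : scr x (vneg y) = - scr x y.
Proof. rewrite /scr /cross /vneg /=; ring. Qed.
Lemma scrC x y : scr x y = - scr y x.
Proof. rewrite /scr /cross /vneg /=; ring. Qed.
Lemma dotNr x y : dot x (vneg y) = - dot x y.
Proof. rewrite /dot /vneg /=; ring. Qed.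

Definition inH o u := 0 < scr o u \/ (scr o u = 0 /\ 0 < dot o u).

Lemma dotpos o : o <> (0,0) -> 0 < dot o o.
Proof.
case: o => o1 o2 H; rewrite /dot /= -!expr2 lt0r paddr_eq0 ?sqr_ge0 // !sqrf_eq0.
rewrite addr_ge0 ?sqr_ge0 // andbT; apply/negP => /andP [/eqP h1 /eqP h2]; apply: H; by rewrite h1 h2.
Qed.

Lemma Hcore o x y z : 0 < dot o o -> inH o x -> inH o y -> inH o z ->
  [/\ (0 <= scr x y -> 0 <= scr y z -> 0 <= scr x z),
      (0 < scr x y -> 0 <= scr y z -> 0 < scr x z) &
      (0 <= scr x y -> 0 < scr y z -> 0 < scr x z)].
Proof.
move=> n0 Hx Hy Hz.
have P := plucker o x y z; have D1 := dotid o x y; have D2 := dotid o y z.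
have D3 := dotid o x z.
move: P D1 D2 D3 n0 Hx Hy Hz.
rewrite /inH.
generalize (scr x z) (scr o y) (scr x y) (scr o z) (scr y z) (scr o x) (dot o o) (dot o x) (dot o y) (dot o z).
move=> sxz soy sxy soz syz sox n dox doy doz P D1 D2 D3 n0 Hx Hy Hz.
case: Hx => [Hx|[Hx Hx']]; case: Hy => [Hy|[Hy Hy']]; case: Hz => [Hz|[Hz Hz']]; split => h1 h2; nra.
Qed.
End Vec.
Unset Implicit Arguments. Set Strict Implicit.
Section Poly.
Variable R : realFieldType.
Variable s : seq (pt R).
Variable sg : R.
Hypothesis sgsq : sg * sg = 1.
Local Notation k := (size s).
Hypothesis k3 : (3 <= k)%N.
Hypothesis conv : forall i j, (i < k)%N -> (j < k)%N -> j != i -> j != (i.+1 %% k)%N ->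
  0 < sg * cross (side_dir s i) (psub (vtx s j) (vtx s i)).
Local Notation v := (vtx s).
Local Notation e := (side_dir s).
Local Notation C a b := (scr sg (e a) (e b)).

Lemma k0 : (0 < k)%N. Proof. by apply: leq_trans k3. Qed.

Lemma modS m : ((m %% k).+1 %% k = m.+1 %% k)%N.
Proof. by rewrite -addn1 modnDml addn1. Qed.

Lemma vtx_mod m : v (m %% k) = v m.
Proof. by rewrite /vtx modn_mod. Qed.

Lemma e_mod m : e (m %% k) = e m.
Proof. by rewrite /side_dir /vtx modn_mod modS. Qed.

Lemma e_k : e k = e 0.
Proof. by rewrite -e_mod modnn. Qed.

Lemma conv' i j : (j %% k != i %% k)%N -> (j %% k != i.+1 %% k)%N ->
  0 < scr sg (e i) (psub (v j) (v i)).
Proof.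
move=> h1 h2; have := @conv (i %% k) (j %% k) (ltn_pmod i k0) (ltn_pmod j k0) h1.
by rewrite modS vtx_mod vtx_mod e_mod => /(_ h2).
Qed.

Lemma mod_neq d m : (0 < d < k)%N -> ((m + d) %% k != m %% k)%N.
Proof.
case/andP=> d0 dk; apply/negP; rewrite eqn_mod_dvd ?leq_addr // addKn => /dvdn_leq.
by move/(_ d0); rewrite leqNgt dk.
Qed.

Lemma consec m : 0 < C m m.+1.
Proof.
have h1 : (m.+2 %% k != m %% k)%N.
  by have := @mod_neq 2 m; rewrite addn2; apply; rewrite /= (leq_trans _ k3).
have h2 : (m.+2 %% k != m.+1 %% k)%N.
  by have := @mod_neq 1 m.+1; rewrite addn1; apply; rewrite /= (leq_trans _ k3).
have := @conv' m m.+2 h1 h2.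
suff -> : scr sg (e m) (psub (v m.+2) (v m)) = C m m.+1 by [].
rewrite /scr /side_dir /psub /cross /=; ring.
Qed.

Lemma e_nz m : e m <> (0,0).
Proof.
move=> h; have := consec m; rewrite h /scr /cross /= !mul0r subrr mulr0 ltxx //.
Qed.

Lemma scrxx (x : pt R) : scr sg x x = 0.
Proof. rewrite /scr /cross; ring. Qed.

Lemma exP : exists m, (0 < m)%N && (C 0 m <= 0).
Proof.
exists k.-1; apply/andP; split; first by rewrite -ltnS prednK ?k0 // (leq_trans _ k3).
have := consec k.-1; rewrite prednK ?k0 // e_k scrC => h.
by rewrite -oppr_ge0 ltW.
Qed.

Definition p := ex_minn exP.

Lemma pP : [/\ (0 < p)%N, C 0 p <= 0 & forall m, (0 < m)%N -> C 0 m <= 0 -> (p <= m)%N].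
Proof.
rewrite /p; case: ex_minnP => m /andP [h1 h2] h3; split => // n n0 hn.
by apply: h3; rewrite n0.
Qed.

Lemma p_lt_k : (p < k)%N.
Proof.
case: pP => _ _ h; apply: leq_ltn_trans (h k.-1 _ _) _.
- by rewrite -ltnS prednK ?k0 // (leq_trans _ k3).
- have := consec k.-1; rewrite prednK ?k0 // e_k scrC => h'.
  by rewrite -oppr_ge0 ltW.
- by rewrite prednK ?k0.
Qed.

Lemma p_ge2 : (2 <= p)%N.
Proof.
case: pP => p0 pn _; rewrite ltn_neqAle p0 andbT; apply/eqP => p1.
by move: pn; rewrite -p1 leNgt consec.
Qed.

Lemma upper m : (0 < m)%N -> (m < p)%N -> 0 < C 0 m.
Proof.
case: pP => _ _ h m0 mp; rewrite ltNge; apply/negP => /(h m m0); by rewrite leqNgt mp.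
Qed.

Lemma geomL m : (2 <= m)%N -> (m + 2 <= k)%N -> C 0 m <= 0 -> C 0 m.+1 < 0.
Proof.
move=> m2 mk h4.
have mk' : (m < k)%N by lia.
have m1k : (m.+1 < k)%N by lia.
have F1 : 0 < scr sg (e m) (psub (v 1) (v m)).
  by apply: conv'; rewrite !modn_small //; lia.
have F2 : 0 < scr sg (e m.+1) (psub (v 1) (v m.+1)).
  apply: conv'; first by rewrite !modn_small //; lia.
  move: mk; rewrite leq_eqVlt => /orP [/eqP <-| mk2].
    have -> : (m.+2 = m + 2)%N by lia.
    by rewrite modnn modn_small //; lia.
  by rewrite !modn_small //; lia.
have F3 := consec m.
have F5 : 0 < scr sg (e 0) (psub (v m.+1) (v 0)).
  by apply: conv'; rewrite ?mod0n !modn_small //; lia.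
have P := plucker sgsq (e 0) (e m) (psub (v 1) (v m.+1)) (e m.+1).
have E1 : scr sg (e m) (psub (v 1) (v m.+1)) = scr sg (e m) (psub (v 1) (v m)).
  rewrite /scr /side_dir /psub /cross /=; ring.
have E2 : scr sg (e 0) (psub (v 1) (v m.+1)) = - scr sg (e 0) (psub (v m.+1) (v 0)).
  rewrite /scr /side_dir /psub /cross /=; ring.
have E3 : scr sg (psub (v 1) (v m.+1)) (e m.+1) = - scr sg (e m.+1) (psub (v 1) (v m.+1)).
  by rewrite scrC.
rewrite E1 E2 E3 in P.
move: P F1 F2 F3 F5 h4.
generalize (scr sg (e m) (e m.+1)) (scr sg (e 0) (psub (v m.+1) (v 0))) (scr sg (e m) (psub (v 1) (v m)))
  (scr sg (e 0) (e m.+1)) (scr sg (e m.+1) (psub (v 1) (v m.+1))) (scr sg (e 0) (e m)).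
move=> *; nra.
Qed.


Lemma lower m : (p < m)%N -> (m < k)%N -> C 0 m < 0.
Proof.
have p2 := p_ge2; have pk := p_lt_k.
elim: m => // m IH pm mk.
case: (ltngtP p m) => [pm'|pm'|pe].
- apply: geomL; [lia|lia|]; apply: ltW; apply: IH => //; lia.
- lia.
- rewrite -pe; apply: geomL; [lia|lia|]; by case: pP.
Qed.

Lemma n0 : 0 < dot (e 0) (e 0).
Proof. exact: dotpos (e_nz 0). Qed.

Lemma inHX a : (a < p)%N -> inH sg (e 0) (e a).
Proof.
case: a => [_|a ap]; first by right; split; [exact: scrxx| exact: n0].
by left; apply: upper.
Qed.

Lemma inHY b : (p <= b)%N -> (b < k)%N -> inH sg (e 0) (vneg (e b)).
Proof.
move=> pb bk; rewrite /inH scrNr.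
case: (ltngtP p b) => [pb'|bp|pe]; [by left; rewrite oppr_gt0; apply: lower| lia |].
rewrite -pe; case: pP => _ h _.
case: (ltrgt0P (C 0 p)) => [h'|h'|h'].
- by move: h; rewrite leNgt h'.
- by left; rewrite oppr_gt0.
right; rewrite h' oppr0 dotNr oppr_gt0; split => //; try (apply/and3P; split; lia).
have p2 := p_ge2.
have D := dotid sg (e 0) (e p.-1) (e p).
have c1 := consec p.-1; rewrite prednK in c1; last by lia.
have u1 : 0 < C 0 p.-1 by apply: upper; lia.
have nn := n0.
rewrite h' in D; move: D c1 u1 nn.
generalize (dot (e 0) (e 0)) (scr sg (e p.-1) (e p)) (dot (e 0) (e p.-1)) (scr sg (e 0) (e p.-1)) (dot (e 0) (e p)).
move=> *; nra.
Qed.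

Lemma SA a a' : (a < a')%N -> (a' < p)%N -> 0 < C a a'.
Proof.
elim: a' => // a' IH aa' a'p.
case: (ltngtP a a') => [h|h|->]; last exact: consec.
- have [_ _ T3] := Hcore sgsq n0 (@inHX a (ltn_trans aa' a'p)) (@inHX a' (ltnW a'p)) (@inHX a'.+1 a'p).
  apply: T3; first by apply: ltW; apply: IH => //; apply: ltnW.
  exact: consec.
- lia.
Qed.

Lemma SA' a a' : (a <= a')%N -> (a' < p)%N -> 0 <= C a a'.
Proof.
rewrite leq_eqVlt => /orP [/eqP ->|h] hp; first by rewrite scrxx.
by apply: ltW; apply: SA.
Qed.

Lemma scrNN x y : scr sg (vneg x) (vneg y) = scr sg x y.
Proof. by rewrite scrNl scrNr opprK. Qed.

Lemma SB b b' : (p <= b)%N -> (b < b')%N -> (b' < k)%N -> 0 < C b b'.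
Proof.
move=> pb; elim: b' => // b' IH bb' b'k.
case: (ltngtP b b') => [h|h|->]; last exact: consec.
- have [_ _ T3] := Hcore sgsq n0 (@inHY b pb (ltn_trans bb' b'k)) (@inHY b' (leq_trans pb (ltnW h)) (ltnW b'k)) (@inHY b'.+1 (leq_trans pb (ltnW bb')) b'k).
  rewrite -scrNN; apply: T3; rewrite scrNN; first by apply: ltW; apply: IH => //; apply: ltnW.
  exact: consec.
- lia.
Qed.

Lemma SB' b b' : (p <= b)%N -> (b <= b')%N -> (b' < k)%N -> 0 <= C b b'.
Proof.
move=> pb; rewrite leq_eqVlt => /orP [/eqP ->|h] hk; first by rewrite scrxx.
by apply: ltW; apply: SB.
Qed.


Definition Inv (a b : nat) := [/\ [&& (a <= p)%N, (p <= b)%N & (b <= k)%N], (a = 0%N -> b = p),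
  ((a < p)%N -> (p < b)%N -> 0 <= C a b.-1) & ((0 < a)%N -> (b < k)%N -> C a.-1 b <= 0)].

Lemma scrYX x y : scr sg (vneg x) y = scr sg y x.
Proof. by rewrite scrNl -scrC. Qed.
Lemma scrXY x y : scr sg x (vneg y) = scr sg y x.
Proof. by rewrite scrNr -scrC. Qed.

Lemma Ainv a b : Inv a b -> (a < p)%N -> ((b < k)%N -> C a b <= 0) -> Inv a.+1 b.
Proof.
case=> /and3P [h1 h2 h3] h4 h5 h6 ap hc; split => //; try (apply/and3P; split; lia).
- move=> a1p pb.
  have pb1 : (p <= b.-1)%N by lia.
  have b1k : (b.-1 < k)%N by lia.
  have [T1 T2 T3] := Hcore sgsq n0 (@inHY b.-1 pb1 b1k) (@inHX a ap) (@inHX a.+1 a1p).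
  rewrite -scrYX; apply: T1; rewrite ?scrYX; first exact: h5.
  exact: ltW (consec a).
all: by move=> _ /hc.
Qed.

Lemma Adeg a b : Inv a b -> (a < p)%N -> ((b < k)%N -> C a b <= 0) -> C a b.-1 * C a b <= 0.
Proof.
case=> /and3P [h1 h2 h3] h4 h5 h6 ap hc.
have pk := p_lt_k; have p2 := p_ge2.
have c1 : 0 <= C a b.-1.
  case: (ltngtP p b) => [pb|pb|pe]; [exact: h5 | lia |].
  by rewrite -pe; apply: SA'; lia.
have c2 : C a b <= 0.
  case: (ltngtP b k) => [bk|bk|be]; [exact: hc | lia |].
  rewrite be e_k scrC oppr_le0; exact: SA'.
by rewrite mulr_ge0_le0.
Qed.

Lemma Binv a b : Inv a b -> (b < k)%N -> (0 < a)%N -> ((a < p)%N -> 0 < C a b) -> Inv a b.+1.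
Proof.
case=> /and3P [h1 h2 h3] h4 h5 h6 bk a0 hc; split => //; try (apply/and3P; split; lia).
- by move=> h; rewrite h in a0.
- by move=> ap _; apply: ltW; apply: hc.
- move=> _ b1k.
  have a1p : (a.-1 < p)%N by lia.
  have [T1 T2 T3] := Hcore sgsq n0 (@inHX a.-1 a1p) (@inHY b h2 bk) (@inHY b.+1 (leq_trans h2 (leqnSn b)) b1k).
  have : 0 < scr sg (e a.-1) (vneg (e b.+1)).
    apply: T3; first by rewrite scrXY scrC oppr_ge0; exact: h6.
    by rewrite scrNN; exact: consec.
  by rewrite scrXY scrC oppr_gt0 => /ltW.
Qed.

Lemma Bdeg a b : Inv a b -> (b < k)%N -> (0 < a)%N -> ((a < p)%N -> 0 < C a b) ->
  C b a.-1 * C b a <= 0.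
Proof.
case=> /and3P [h1 h2 h3] h4 h5 h6 bk a0 hc.
have c1 : 0 <= C b a.-1 by rewrite scrC oppr_ge0; exact: h6.
have c2 : C b a <= 0.
  rewrite scrC oppr_le0; case: (ltngtP a p) => [ap|ap|ae]; [exact: ltW (hc ap)| lia |].
  by rewrite ae; apply: SB'.
by rewrite mulr_ge0_le0.
Qed.

Lemma Dinv a b : Inv a b -> (a < p)%N -> (b < k)%N -> C a b = 0 -> Inv a.+1 b.+1.
Proof.
case=> /and3P [h1 h2 h3] h4 h5 h6 ap bk hc; split => //; try (apply/and3P; split; lia).
- move=> a1p _ /=.
  have [T1 T2 T3] := Hcore sgsq n0 (@inHY b h2 bk) (@inHX a ap) (@inHX a.+1 a1p).
  rewrite -scrYX; apply/ltW; apply: T3; rewrite ?scrYX ?hc //; exact: consec.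
- move=> _ b1k /=.
  have [T1 T2 T3] := Hcore sgsq n0 (@inHX a ap) (@inHY b h2 bk) (@inHY b.+1 (leq_trans h2 (leqnSn b)) b1k).
  have : 0 < scr sg (e a) (vneg (e b.+1)).
    apply: T3; first by rewrite scrXY scrC hc oppr0.
    by rewrite scrNN; exact: consec.
  by rewrite scrXY scrC oppr_gt0 => /ltW.
Qed.


Definition stepf (st : nat * nat) : nat * nat :=
  let: (a, b) := st in
  if (a < p)%N then
    if (b < k)%N then
      (if C a b < 0 then (a.+1, b) else if 0 < C a b then (a, b.+1) else (a.+1, b.+1))
    else (a.+1, b)
  else if (b < k)%N then (a, b.+1) else (a, b).

Definition SpecA a b := [/\ Inv a.+1 b, (a < p)%N, ((b < k)%N -> C a b < 0) & C a b.-1 * C a b <= 0].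
Definition SpecB a b := [/\ Inv a b.+1, (b < k)%N, (0 < a)%N, ((a < p)%N -> 0 < C a b) & C b a.-1 * C b a <= 0].
Definition SpecD a b := [/\ Inv a.+1 b.+1, (a < p)%N, (b < k)%N & C a b = 0].

Lemma step_spec a b : Inv a b -> ~ (a = p /\ b = k) ->
  [\/ stepf (a,b) = (a.+1, b) /\ SpecA a b,
      stepf (a,b) = (a, b.+1) /\ SpecB a b |
      stepf (a,b) = (a.+1, b.+1) /\ SpecD a b].
Proof.
move=> I nf; have I' := I; case: I' => /and3P[h1 h2 h3] h4 _ _.
have p2 := p_ge2; have pk := p_lt_k.
rewrite /stepf; case: ifP => ap.
  case: ifP => bk.
    case: ifP => c1.
      have hc : (b < k)%N -> C a b <= 0 by move=> _; exact: ltW.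
      by constructor 1; split => //; split => //; [exact: Ainv | exact: Adeg].
    case: ifP => c2.
      have a0 : (0 < a)%N.
        case: a h4 {h1 I ap c1 c2 nf} (c2) => // /(_ erefl) ->.
        by case: pP => _ h _; rewrite ltNge h.
      have hc : (a < p)%N -> 0 < C a b by [].
      by constructor 2; split => //; split => //; [exact: Binv | exact: Bdeg].
    have c0 : C a b = 0.
      by apply/le_anti; rewrite !leNgt c1 c2.
    by constructor 3; split => //; split => //; exact: Dinv.
  have hc : (b < k)%N -> C a b <= 0 by rewrite bk.
  constructor 1; split => //; split => //; [exact: Ainv | by rewrite bk | exact: Adeg].
have ae : a = p by lia.
case: ifP => bk.
  have a0 : (0 < a)%N by lia.
  have hc : (a < p)%N -> 0 < C a b by rewrite ap.
  by constructor 2; split => //; split => //; [exact: Binv | exact: Bdeg].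
exfalso; apply: nf; split => //; lia.
Qed.


Definition st t := iter t stepf (0%N, p).
Definition aa t := (st t).1.
Definition bb t := (st t).2.

Lemma stepf_final : stepf (p, k) = (p, k).
Proof. by rewrite /stepf !ltnn. Qed.

Lemma Inv0 : Inv 0 p.
Proof.
have pk := p_lt_k; split => //; first by apply/and3P; split => //; lia.
by rewrite ltnn.
Qed.

Lemma Invf : Inv p k.
Proof.
have pk := p_lt_k; have p2 := p_ge2.
split => //; first (apply/and3P; split => //; lia); try lia; by rewrite ltnn.
Qed.

Lemma stE t : st t = (aa t, bb t).
Proof. by rewrite /aa /bb; case: (st t). Qed.

Lemma step_st t : st t = (p, k) /\ st t.+1 = (p, k) \/
  [\/ st t.+1 = ((aa t).+1, bb t) /\ SpecA (aa t) (bb t),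
      st t.+1 = (aa t, (bb t).+1) /\ SpecB (aa t) (bb t) |
      st t.+1 = ((aa t).+1, (bb t).+1) /\ SpecD (aa t) (bb t)].
Proof.
elim: t => [|t IH].
  right; apply: step_spec; first exact: Inv0.
  by case=> h _; have := p_ge2; rewrite -h.
have Hinv : Inv (aa t.+1) (bb t.+1).
  rewrite /aa /bb; case: IH => [[_ ->]|[[-> [H _ _ _]]|[-> [H _ _ _ _]]|[-> [H _ _ _]]]] //=.
  exact: Invf.
have -> : st t.+2 = stepf (st t.+1) by [].
rewrite (stE t.+1).
case: (boolP ((aa t.+1 == p) && (bb t.+1 == k))) => [/andP[/eqP -> /eqP ->]|nf].
  by left; rewrite stepf_final.
right; apply: step_spec => //.
by case=> e1 e2; rewrite e1 e2 !eqxx in nf.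
Qed.

Lemma Inv_st t : Inv (aa t) (bb t).
Proof.
case: t => [|t]; first exact: Inv0.
case: (step_st t) => [[_ E]|[[E [H _ _ _]]|[E [H _ _ _ _]]|[E [H _ _ _]]]];
  rewrite /aa /bb E //=.
exact: Invf.
Qed.

Lemma prog t : st t = (p, k) \/ (p + t <= aa t + bb t)%N.
Proof.
elim: t => [|t IH]; first by right; rewrite /aa /bb /= add0n addn0.
case: (step_st t) => [[_ E]|[[E _]|[E _]|[E _]]]; first by left.
all: right; case: IH => [E'|h]; last by have := f_equal fst E; have := f_equal snd E; rewrite -/(aa t.+1) -/(bb t.+1) /= => -> ->; lia.
all: have F : st t.+1 = stepf (st t) by [].
all: move: E; rewrite F E' stepf_final /aa /bb E' /=; case=> *; lia.
Qed.

Lemma st_k : st k = (p, k).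
Proof.
case: (prog k) => // h; have := Inv_st k; case=> /and3P [h1 h2 h3] _ _ _.
by rewrite stE; congr pair; lia.
Qed.

Lemma exN : exists t, st t == (p, k).
Proof. by exists k; rewrite st_k. Qed.

Definition N := ex_minn exN.

Lemma NP : st N = (p, k) /\ forall t, st t = (p, k) -> (N <= t)%N.
Proof.
rewrite /N; case: ex_minnP => m /eqP h1 h2; split => // t ht; apply: h2; exact/eqP.
Qed.

Lemma N_step t : (t < N)%N ->
  [\/ st t.+1 = ((aa t).+1, bb t) /\ SpecA (aa t) (bb t),
      st t.+1 = (aa t, (bb t).+1) /\ SpecB (aa t) (bb t) |
      st t.+1 = ((aa t).+1, (bb t).+1) /\ SpecD (aa t) (bb t)].
Proof.
move=> tN; case: (step_st t) => // [[h _]].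
case: NP => _ /(_ t h); by rewrite leqNgt tN.
Qed.

Lemma mono1 t : [/\ (aa t <= aa t.+1)%N, (aa t.+1 <= (aa t).+1)%N, (bb t <= bb t.+1)%N & (bb t.+1 <= (bb t).+1)%N].
Proof.
rewrite /aa /bb; case: (step_st t) => [[-> ->]|[[-> _]|[-> _]|[-> _]]] //=; split => //.
Qed.

Lemma aa_mono : {homo aa : i j / (i <= j)%N}.
Proof. apply: homo_leq => //; [exact: leq_trans| by move=> i; case: (mono1 i)]. Qed.
Lemma bb_mono : {homo bb : i j / (i <= j)%N}.
Proof. apply: homo_leq => //; [exact: leq_trans| by move=> i; case: (mono1 i)]. Qed.

Lemma aaN : aa N = p. Proof. by rewrite /aa; case: NP => ->. Qed.
Lemma bbN : bb N = k. Proof. by rewrite /bb; case: NP => ->. Qed.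
Lemma aa0 : aa 0 = 0%N. Proof. by []. Qed.
Lemma bb0 : bb 0 = p. Proof. by []. Qed.
Lemma N0 : (0 < N)%N.
Proof.
rewrite lt0n; apply/negP => /eqP h; have := aaN; rewrite h aa0 => h'.
by have := p_ge2; rewrite -h'.
Qed.


Lemma telesc (f : nat -> nat) : {homo f : i j / (i <= j)%N} ->
  forall n, (\sum_(t < n) (f t.+1 - f t) = f n - f 0)%N.
Proof.
move=> hf; elim=> [|n IH]; first by rewrite big_ord0 subnn.
rewrite big_ord_recr /= IH; have := hf 0%N n isT; have := hf n n.+1 (leqnSn n); lia.
Qed.

Lemma Sneq x : (x.+1 != x) = true.
Proof. by rewrite neq_ltn ltnSn orbT. Qed.

Definition Dt t := (aa t.+1 != aa t) && (bb t.+1 != bb t).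

Lemma sum_steps : (k = N + \sum_(t < N) Dt t)%N.
Proof.
have E : (\sum_(t < N) ((aa t.+1 - aa t) + (bb t.+1 - bb t)) = \sum_(t < N) (1 + Dt t))%N.
  apply: eq_bigr => [[t tN]] _ /=; rewrite /Dt.
  case: (@N_step t tN) => [[E _]|[E _]|[E _]]; rewrite /aa /bb E /= -/(aa t) -/(bb t).
  - by rewrite eqxx andbF subSn // subnn subnn.
  - by rewrite eqxx /= subSn // subnn subnn.
  - have H : forall x, (x.+1 != x) = true by move=> x; rewrite neq_ltn ltnSn orbT.
    by rewrite !H /= !subSn // !subnn.
move: E; rewrite !big_split /= (@telesc aa aa_mono) (@telesc bb bb_mono) aaN bbN aa0 bb0 subn0.
rewrite sum_nat_const card_ord muln1.
have := p_lt_k; lia.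
Qed.

Lemma ivt (f : nat -> nat) i T : (forall t, f t.+1 <= (f t).+1)%N -> (f 0 <= i)%N -> (i < f T)%N ->
  exists t, [/\ (t < T)%N, f t = i & f t.+1 = i.+1].
Proof.
move=> hf h0; elim: T => [|T IH]; first by lia.
move=> hT; case: (ltnP i (f T)) => h.
  by case: (IH h) => t [h1 h2 h3]; exists t; split => //; lia.
have := hf T; exists T; split => //; lia.
Qed.

Lemma aa_lt t : (aa t <= p)%N.
Proof. by case: (Inv_st t) => /and3P []. Qed.
Lemma bb_le t : (bb t <= k)%N.
Proof. by case: (Inv_st t) => /and3P []. Qed.
Lemma bb_ge t : (p <= bb t)%N.
Proof. by case: (Inv_st t) => /and3P []. Qed.

Lemma par_exists i l : (i < l)%N -> (l < k)%N -> C i l = 0 ->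
  exists t, [/\ (t < N)%N, Dt t, aa t = i & bb t = l].
Proof.
move=> il lk cil.
have pk := p_lt_k; have p2 := p_ge2.
have ip : (i < p)%N.
  rewrite ltnNge; apply/negP => pi.
  by have := @SB i l pi il lk; rewrite cil ltxx.
have pl : (p <= l)%N.
  rewrite leqNgt; apply/negP => lp.
  by have := @SA i l il lp; rewrite cil ltxx.
have [t [tN ati ati1]] : exists t, [/\ (t < N)%N, aa t = i & aa t.+1 = i.+1].
  by apply: ivt; [by move=> t; case: (mono1 t) | by rewrite aa0 | by rewrite aaN].
have Dok : forall t', (t' < N)%N -> aa t' = i -> bb t' = l -> aa t'.+1 = i.+1 \/ bb t'.+1 = l.+1 ->
    exists t, [/\ (t < N)%N, Dt t, aa t = i & bb t = l].
  move=> t' t'N h1 h2 h3; exists t'; split => //.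
  case: (@N_step t' t'N) => [[E [_ _ hc _]]|[E [_ _ _ hc _]]|[E _]].
  - by move: (hc); rewrite h1 h2 cil ltxx => /(_ lk).
  - by move: (hc); rewrite h1 h2 cil ltxx => /(_ ip).
  - by rewrite /Dt /aa /bb E /= -/(aa t') -/(bb t') !Sneq.
case: (ltngtP (bb t) l) => [bl|lb|be].
- exfalso.
  case: (@N_step t tN) => [[E [_ _ hc _]]|[E _]|[E [_ _ _ hc]]].
  + have : C i (bb t) < 0 by rewrite -ati; apply: hc; lia.
    have [T1 T2 T3] := Hcore sgsq n0 (@inHY (bb t) (bb_ge t) (ltn_trans bl lk)) (@inHY l pl lk) (@inHX i ip).
    have : 0 < scr sg (vneg (e (bb t))) (e i).
      by apply: T2; rewrite ?scrNN ?scrYX ?cil //; apply: SB => //; exact: bb_ge.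
    by rewrite scrYX => /lt_gtF ->.
  + by move: ati1; rewrite /aa E /= -/(aa t) ati => /n_Sn.
  + have [T1 T2 T3] := Hcore sgsq n0 (@inHY (bb t) (bb_ge t) (ltn_trans bl lk)) (@inHY l pl lk) (@inHX i ip).
    have : 0 < scr sg (vneg (e (bb t))) (e i).
      by apply: T2; rewrite ?scrNN ?scrYX ?cil //; apply: SB => //; exact: bb_ge.
    by rewrite scrYX -ati hc ltxx.
- have [t' [t't bt' bt'1]] : exists t', [/\ (t' < t)%N, bb t' = l & bb t'.+1 = l.+1].
    by apply: ivt; [by move=> t'; case: (mono1 t') | by rewrite bb0 | by []].
  have t'N : (t' < N)%N by apply: ltn_trans tN.
  have at' : (aa t' <= i)%N by rewrite -ati; apply: aa_mono; apply: ltnW.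
  case: (ltngtP (aa t') i) => [ai|ia|ae]; [|lia|by apply: (Dok t') => //; right].
  exfalso.
  have c0 : 0 <= C (aa t') l.
    case: (@N_step t' t'N) => [[E _]|[E [_ _ _ hc _]]|[E [_ _ _ hc]]].
    + by move: bt'1; rewrite /bb E /= -/(bb t') bt' => /n_Sn.
    + by rewrite -bt'; apply: ltW; apply: hc; exact: ltn_trans ai ip.
    + by rewrite -bt' hc.
  have [T1 T2 T3] := Hcore sgsq n0 (@inHX (aa t') (ltn_trans ai ip)) (@inHX i ip) (@inHY l pl lk).
  have : 0 < scr sg (e (aa t')) (vneg (e l)).
    by apply: T2; [exact: (@SA (aa t') i ai ip) | by rewrite scrXY scrC cil oppr0].
  by rewrite scrXY scrC oppr_gt0 => /lt_geF; rewrite c0.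
- by apply: (Dok t) => //; left.
Qed.


Lemma sg0 : sg != 0.
Proof. by apply/eqP => h; move: sgsq; rewrite h mul0r => /eqP; rewrite eq_sym oner_eq0. Qed.

Lemma cross0 x y : scr sg x y = 0 -> cross x y = 0.
Proof. by move/eqP; rewrite /scr mulf_eq0 (negbTE sg0) /= => /eqP. Qed.

Lemma vneq x : v x.+1 <> v x.
Proof. by move=> h; apply: (e_nz x); rewrite /side_dir h /psub !subrr. Qed.

Lemma degen x y : (0 < y)%N -> C x y.-1 * C x y <= 0 ->
  degenerate_side s (v x) (v x.+1) (v y) (v y).
Proof.
move=> y0 hc; split => //; split; first exact: vneq.
move=> t.
set P := padd (v y) (pscale t (psub (v x.+1) (v x))).
have X1 : cross (e (y.-1 %% k)) (psub P (v (y.-1 %% k))) = t * cross (e y.-1) (e x).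
  rewrite e_mod vtx_mod /P /side_dir (prednK y0) /cross /psub /padd /pscale /=; ring.
have X2 : cross (e (y %% k)) (psub P (v (y %% k))) = t * cross (e y) (e x).
  rewrite e_mod vtx_mod /P /side_dir /cross /psub /padd /pscale /=; ring.
have hc' : cross (e y.-1) (e x) * cross (e y) (e x) <= 0.
  move: hc; rewrite (scrC _ (e x) (e y.-1)) (scrC _ (e x) (e y)) mulrNN /scr sgE //.
have i1 := ltn_pmod y.-1 k0; have i2 := ltn_pmod y k0.
case=> H.
- have h1 := H _ i1; have h2 := H _ i2; rewrite X1 in h1; rewrite X2 in h2.
  move: h1 h2 hc'; generalize (cross (e y.-1) (e x)) (cross (e y) (e x)) => c1 c2; nra.
- have h1 := H _ i1; have h2 := H _ i2; rewrite X1 in h1; rewrite X2 in h2.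
  move: h1 h2 hc'; generalize (cross (e y.-1) (e x)) (cross (e y) (e x)) => c1 c2; nra.
Qed.

Lemma par x y : C x y = 0 -> parallel_sides (v x) (v x.+1) (v y) (v y.+1).
Proof.
move=> h; split; first exact: vneq; split; first exact: vneq.
exact: cross0 h.
Qed.


Lemma Dt_D t : (t < N)%N -> Dt t -> SpecD (aa t) (bb t).
Proof.
move=> tN; case: (@N_step t tN) => [[E _]|[E _]|[E H]] //.
- by rewrite /Dt {1}/bb E /= -/(bb t) eqxx andbF.
- by rewrite /Dt {1}/aa E /= -/(aa t) eqxx.
Qed.

Definition phi (t : 'I_N) : 'I_k * 'I_k :=
  (Ordinal (ltn_pmod (aa t) k0), Ordinal (ltn_pmod (bb t) k0)).

Lemma card_par : num_parallel_pairs s = (\sum_(t < N) Dt t)%N.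
Proof.
have pk := p_lt_k.
rewrite /num_parallel_pairs.
have -> : [set ij : 'I_k * 'I_k | (ij.1 < ij.2)%N && (cross (e ij.1) (e ij.2) == 0)] =
    phi @: [set t : 'I_N | Dt t].
  apply/setP => -[i l]; rewrite inE /=; apply/idP/imsetP.
  - case/andP => il /eqP c0.
    have cil : C i l = 0 by rewrite /scr c0 mulr0.
    have [t [tN Dtt ai bl]] := @par_exists i l il (ltn_ord l) cil.
    exists (Ordinal tN); first by rewrite inE.
    by congr pair; apply: val_inj; rewrite /= ?ai ?bl modn_small.
  - case=> t; rewrite inE => Dtt [-> ->] /=.
    have [_ ap bk c0] := @Dt_D t (ltn_ord t) Dtt.
    rewrite !modn_small //; last by apply: ltn_trans pk.
    by rewrite (leq_trans ap (bb_ge t)) /= (@cross0 _ _ c0).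
rewrite card_in_imset; first by rewrite -sum1_card big_mkcond; apply: eq_bigr => t _; rewrite inE; case: (Dt t).
move=> t1 t2; rewrite !inE => D1 D2 /= [] h1 _.
have a1 : aa t1 = aa t2.
  by rewrite !modn_small in h1 => //; apply: leq_ltn_trans (aa_lt _) pk.
have Sa : forall t, Dt t -> aa t.+1 = (aa t).+1.
  move=> t /andP [/eqP h _]; case: (mono1 t) => h2 h3 _ _; lia.
apply: val_inj; case: (ltngtP t1 t2) => // h.
- have := @aa_mono t1.+1 t2 h; rewrite Sa // a1; lia.
- have := @aa_mono t2.+1 t1 h; rewrite Sa // a1; lia.
Qed.


Definition Q := [seq v (aa t) | t <- iota 0 N] ++ [seq v (bb t) | t <- iota 0 N].

Lemma size_Q : size Q = (N + N)%N.
Proof. by rewrite size_cat !size_map size_iota. Qed.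

Lemma nthQ t : (t < N + N)%N -> nth (0,0) Q t = if (t < N)%N then v (aa t) else v (bb (t - N)).
Proof.
move=> tN; rewrite nth_cat size_map size_iota; case: ifP => h.
  by rewrite (nth_map 0%N) ?size_iota // nth_iota.
by rewrite (nth_map 0%N) ?size_iota ?nth_iota //; lia.
Qed.

Lemma vtxQ_a t : (t <= N)%N -> vtx Q t = v (aa t).
Proof.
have N0' := N0.
move=> tN; rewrite /vtx size_Q modn_small; last by lia.
rewrite nthQ; last by lia.
case: ifP => h //; have -> : t = N by lia.
by rewrite subnn bb0 aaN.
Qed.

Lemma vtxQ_b t : (t <= N)%N -> vtx Q (t + N) = v (bb t).
Proof.
have N0' := N0.
move=> tN; rewrite /vtx size_Q.
case: (ltngtP t N) => [h|h|->]; [|lia|].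
  rewrite modn_small; last by lia.
  rewrite nthQ; last by lia.
  by rewrite ifN ?addnK //; rewrite -leqNgt leq_addl.
rewrite modnn nthQ ?bbN ?modnn; last by lia.
by rewrite N0' aa0 /vtx mod0n.
Qed.

Definition fQ m := if (m < N)%N then aa m else (bb (m - N) %% k)%N.

Lemma fS m : (m < N + N)%N -> fQ ((m.+1) %% (N + N)) = if (m < N)%N then aa m.+1 else (bb (m.+1 - N) %% k)%N.
Proof.
have N0' := N0; have pk := p_lt_k.
move=> mN; case: (ltngtP m.+1 (N + N)) => [h|h|h]; [|lia|].
  rewrite modn_small // /fQ.
  case: (ltngtP m.+1 N) => [h1|h1|h1].
  - by [].
  - by [].
  - by rewrite h1 subnn bb0 aaN modn_small.
rewrite h modnn /fQ N0' aa0 ifN; last by lia.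
have -> : (N + N - N = N)%N by lia.
by rewrite bbN modnn.
Qed.

Lemma neq_diff x y : (x <= y)%N -> (y <= x.+1)%N -> ((y != x) : nat) = (y - x)%N.
Proof.
move=> h1 h2; case: (eqVneq y x) => [->|h]; first by rewrite subnn.
by rewrite /=; lia.
Qed.

Lemma bb_diff u : ((bb u.+1 %% k != bb u %% k)%N : nat) = (bb u.+1 - bb u)%N.
Proof.
case: (mono1 u) => _ _ h1 h2.
case: (eqVneq (bb u.+1) (bb u)) => [->|h]; first by rewrite eqxx subnn.
have E : bb u.+1 = (bb u).+1 by lia.
have bk := bb_le u.+1.
rewrite E subSn // subnn.
have bk' : (bb u < k)%N by lia.
rewrite (modn_small bk').
case: (ltngtP (bb u).+1 k) => [h3|h3|h3]; [|lia|].
  by rewrite modn_small // Sneq.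
by rewrite h3 modnn; have -> : (0 == bb u)%N = false by apply/eqP; lia.
Qed.

Lemma relist : vertex_relisting s Q.
Proof.
have N0' := N0; have pk := p_lt_k.
exists fQ; split; [|split].
- move=> m; rewrite size_Q => mN; rewrite /fQ; case: ifP => h.
    split; [by apply: leq_ltn_trans (aa_lt _) pk | exact: vtxQ_a (ltnW h)].
  split; first exact: ltn_pmod _ k0.
  rewrite vtx_mod -vtxQ_b; last by lia.
  rewrite subnK //; lia.
- move=> m; rewrite size_Q => mN; rewrite fS // /fQ; case: ifP => h.
    case: (mono1 m) => h1 h2 _ _.
    case: (eqVneq (aa m.+1) (aa m)) => [->|hn]; [by left| right].
    rewrite modn_small; first lia.
    by have := aa_lt m.+1; lia.
  have -> : (m.+1 - N = (m - N).+1)%N by lia.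
  case: (mono1 (m - N)) => _ _ h1 h2.
  case: (eqVneq (bb (m - N).+1) (bb (m - N))) => [->|hn]; [by left| right].
  have -> : bb (m - N).+1 = (bb (m - N)).+1 by lia.
  by rewrite modS.
- rewrite -sum1_card big_mkcond /=.
  rewrite (eq_bigr (fun m : 'I_(size Q) => ((fQ ((m.+1) %% size Q) != fQ m)%N : nat))); last first.
    by move=> i _; rewrite inE; case: (_ != _).
  rewrite -(big_mkord xpredT (fun m => ((fQ ((m.+1) %% size Q) != fQ m)%N : nat))) size_Q big_mkord.
  rewrite big_split_ord /=.
  rewrite (eq_bigr (fun i : 'I_N => (aa i.+1 - aa i)%N)); last first.
    move=> i _; rewrite fS; last by have := ltn_ord i; lia.
    rewrite /fQ ltn_ord; case: (mono1 i) => h1 h2 _ _; exact: neq_diff.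
  rewrite [X in (_ + X)%N](eq_bigr (fun i : 'I_N => (bb i.+1 - bb i)%N)); last first.
    move=> i _; rewrite fS; last by have := ltn_ord i; lia.
    rewrite /fQ ifN; last by rewrite -leqNgt leq_addr.
    rewrite ifN; last by rewrite -leqNgt leq_addr.
    by rewrite -addnS !(addKn N) bb_diff.
  rewrite (@telesc aa aa_mono) (@telesc bb bb_mono) aaN bbN aa0 bb0; lia.
Qed.


Lemma main_sec : exists Q0 : seq (pt R),
    size Q0 = (2 * (k - num_parallel_pairs s))%N /\
    vertex_relisting s Q0 /\
    forall i, (i < k - num_parallel_pairs s)%N ->
      parallel_sides (vtx Q0 i) (vtx Q0 i.+1)
                     (vtx Q0 (i + (k - num_parallel_pairs s))) (vtx Q0 (i + (k - num_parallel_pairs s)).+1) \/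
      degenerate_side s (vtx Q0 i) (vtx Q0 i.+1)
                        (vtx Q0 (i + (k - num_parallel_pairs s))) (vtx Q0 (i + (k - num_parallel_pairs s)).+1) \/
      degenerate_side s (vtx Q0 (i + (k - num_parallel_pairs s))) (vtx Q0 (i + (k - num_parallel_pairs s)).+1)
                        (vtx Q0 i) (vtx Q0 i.+1).
Proof.
have NE : (k - num_parallel_pairs s = N)%N by rewrite card_par {1}sum_steps addnK.
rewrite NE; exists Q; split; first by rewrite size_Q; lia.
split; first exact: relist.
move=> i iN.
rewrite (@vtxQ_a i (ltnW iN)) (@vtxQ_a i.+1 iN) (@vtxQ_b i (ltnW iN)) -addSn (@vtxQ_b i.+1 iN).
have p2 := p_ge2.
case: (@N_step i iN) => [[E [_ ap _ hd]]|[E [_ bk a0 _ hd]]|[E [_ _ _ hc]]];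
  rewrite /aa /bb E /= -/(aa i) -/(bb i).
- right; left; apply: degen => //; have := bb_ge i; lia.
- by right; right; apply: degen.
- by left; apply: par.
Qed.

End Poly.

Theorem lemma2p2 (R : realFieldType) (s : seq (pt R)) (j : nat)
  (Hconv : convex_polygon s)
  (Hpar : num_parallel_pairs s = j)
  (Hj : (2 * j <= size s)%N) :
  exists Q : seq (pt R),
    size Q = (2 * (size s - j))%N /\
    vertex_relisting s Q /\
    forall i, (i < size s - j)%N ->
      parallel_sides (vtx Q i) (vtx Q i.+1)
                     (vtx Q (i + (size s - j))) (vtx Q (i + (size s - j)).+1) \/
      degenerate_side s (vtx Q i) (vtx Q i.+1)
                        (vtx Q (i + (size s - j))) (vtx Q (i + (size s - j)).+1) \/
      degenerate_side s (vtx Q (i + (size s - j))) (vtx Q (i + (size s - j)).+1)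
                        (vtx Q i) (vtx Q i.+1).
Proof.
subst j; case: Hconv => k3 [H|H].
- apply: (@main_sec R s 1 (mulr1 1) k3) => i l il ll h1 h2.
  by rewrite mul1r; apply: H.
- have sq : (-1 : R) * -1 = 1 by rewrite mulrNN mulr1.
  apply: (@main_sec R s (-1) sq k3) => i l il ll h1 h2.
  by rewrite mulN1r oppr_gt0; apply: H.
Qed.
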